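(* Let $n$ be a positive integer and let $L$ and $R$ be the matrices indexed by $P(n)$ defined in the context. Let $x=(x_{(d,c)})_{(d,c)\in P(n)}$ be a column vector such that $x_{(d,c)}=x_{(1,c)}$ for all $(d,c)\in P(n)$. Then $Lx=Rx$.
   Context: Let $\phi$ denote Euler's totient function. For a positive integer $n$ let $P(n)=\{(i,j): j\mid n,\ i\mid j\}$. Define square matrices $L$ and $R$ with rows and columns indexed by $P(n)$ as follows. For a row index $(i,j)$ and a column index $(d,c)$: $L_{(i,j)}^{(d,c)} = \phi(d)\,\frac{n}{\operatorname{lcm}(j,c)}$ if $d\mid i$ and $j\mid \operatorname{lcm}(i,c)$, and $L_{(i,j)}^{(d,c)}=0$ otherwise. For the row $(i,j)$, let $v$ be the largest divisor of $i$ coprime with $j/i$ and put $u=i/v$. Then $R_{(i,j)}^{(e,c)} = u\,\phi(ev/j)\,\frac{n}{\operatorname{lcm}(j,c)}$ if $(j/v)\mid e$, $e\mid j$ and $j\mid\operatorname{lcm}(i,c)$, and $R_{(i,j)}^{(e,c)}=0$ otherwise. (Equivalently, with variables $N_d^c$, $(d,c)\in P(n)$, row $(i,j)$ of $L$ gives the coefficients of $\sum_{d\mid i}\phi(d)\sum_{c\mid n,\ d\mid c,\ j\mid\operatorname{lcm}(i,c)}\frac{n}{\operatorname{lcm}(j,c)}N_d^c$, and row $(i,j)$ of $R$ gives the coefficients of $\sum_{d\mid v}u\phi(d)\sum_{c\mid n,\ d\mid c,\ j\mid \operatorname{lcm}(i,c)}\frac{n}{\operatorname{lcm}(j,c)}N_{jd/v}^c$.)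 *)

(* Defs.v *)
From mathcomp Require Import all_boot all_order all_algebra.
Set Implicit Arguments. Unset Strict Implicit. Unset Printing Implicit Defensive.

Definition Pidx (n : nat) : seq (nat * nat) :=
  [seq (i, j) | j <- divisors n, i <- divisors j].

Definition Lent (n : nat) (row col : nat * nat) : nat :=
  let: (i, j) := row in let: (d, c) := col in
  if (d %| i) && (j %| lcmn i c)
  then totient d * (n %/ lcmn j c) else 0.

Definition vpart (i j : nat) : nat :=
  \max_(w <- divisors i | coprime w (j %/ i)) w.

Definition Rent (n : nat) (row col : nat * nat) : nat :=
  let: (i, j) := row in let: (e, c) := col in
  let v := vpart i j in let u := i %/ v in
  if [&& (j %/ v) %| e, e %| j & j %| lcmn i c]
  then u * totient (e * v %/ j) * (n %/ lcmn j c) else 0.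

(* Main.v *)
Require Import Defs.
From mathcomp Require Import all_boot all_order all_algebra.
From mathcomp Require Import all_solvable zify.
Import GRing.Theory.

Lemma max_mem (r : seq nat) (P : pred nat) :
  \max_(w <- r | P w) w = 0 \/ (\max_(w <- r | P w) w \in r /\ P (\max_(w <- r | P w) w)).
Proof.
elim: r => [|a r IH]; first by rewrite big_nil; left.
rewrite big_cons; case: ifP => Pa.
  case: (leqP a (\max_(w <- r | P w) w)) => h.
    case: IH => [->|[h1 h2]]; first by left.
    by right; rewrite inE h1 orbT.
  by right; rewrite inE eqxx.
by case: IH => [->|[h1 h2]]; [left | right; rewrite inE h1 orbT].
Qed.

Lemma vpart_spec i j : 0 < i ->
  [/\ vpart i j %| i, coprime (vpart i j) (j %/ i) &
      forall w, w %| i -> coprime w (j %/ i) -> w <= vpart i j].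
Proof.
move=> i0.
have hmax : forall w, w %| i -> coprime w (j %/ i) -> w <= vpart i j.
  move=> w wi cw; rewrite /vpart.
  by apply: (@leq_bigmax_seq _ (divisors i) (fun w => coprime w (j %/ i)) (fun x => x) w); rewrite // -dvdn_divisors.
have h1 : 1 <= vpart i j by apply: hmax; rewrite ?dvd1n ?coprime1n.
case: (max_mem (divisors i) (fun w => coprime w (j %/ i))); rewrite -/(vpart i j).
  by move=> h; rewrite h in h1.
by case=> hm hc; split => //; rewrite dvdn_divisors.
Qed.

Lemma sum_totient_divisors g : 0 < g -> \sum_(d <- divisors g) totient d = g.
Proof.
move=> g0; rewrite -{2}(sum_totient_dvd g) -(big_mkord (fun d => d %| g) totient).
rewrite /index_iota subn0 -[RHS]big_filter.
apply: perm_big; apply: uniq_perm; rewrite ?divisors_uniq ?filter_uniq ?iota_uniq //.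
move=> d; rewrite mem_filter mem_iota -dvdn_divisors //= add0n.
case dg: (d %| g) => //=; idtac.
by rewrite ltnS dvdn_leq.
Qed.

Lemma w_dvd_c u v m c : 0 < u -> 0 < v -> 0 < m -> 0 < c ->
  coprime v m -> (forall p, prime p -> p %| u -> p %| m) ->
  u * v * m %| lcmn (u * v) c -> u * m %| c.
Proof.
move=> u0 v0 m0 c0 cvm hp hd.
apply/dvdn_partP; first by rewrite muln_gt0 u0 m0.
move=> p; rewrite mem_primes => /and3P[pp _ pum].
rewrite p_part pfactor_dvdn //.
have pm : p %| m.
  by move: pum; rewrite Euclid_dvdM // => /orP [/(hp _ pp)|].
have Lm : 0 < logn p m by rewrite logn_gt0 mem_primes pp m0 pm.
have Lv : logn p v = 0.
  apply/eqP; rewrite eqn0Ngt logn_gt0 mem_primes pp v0 /=.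
  apply/negP => pv.
  have : p %| gcdn v m by rewrite dvdn_gcd pv pm.
  by rewrite (eqP cvm) dvdn1 => /eqP p1; rewrite p1 in pp.
have l0 : 0 < lcmn (u * v) c by rewrite lcmn_gt0 !muln_gt0 u0 v0 c0.
have := dvdn_leq_log p l0 hd.
rewrite logn_lcm ?muln_gt0 ?u0 ?v0 // !lognM ?muln_gt0 ?u0 ?v0 // Lv.
rewrite leq_max; lia.
Qed.

Lemma u_primes i j p : 0 < i -> i %| j -> prime p ->
  p %| i %/ vpart i j -> p %| j %/ i.
Proof.
move=> i0 ij pp pu; have [vi cv hmax] := @vpart_spec i j i0.
apply/negPn/negP => pm.
have : p * vpart i j <= vpart i j.
  apply: hmax; last by rewrite coprimeMl cv andbT prime_coprime.
  by rewrite -{2}(divnK vi) dvdn_mul.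
have v0 : 0 < vpart i j := dvdn_gt0 i0 vi.
have := prime_gt1 pp; nia.
Qed.

Lemma key n i j c : 0 < n -> j %| n -> i %| j -> c %| n ->
  \sum_(d <- divisors c) Lent n (i, j) (d, c) =
  \sum_(e <- divisors c) Rent n (i, j) (e, c).
Proof.
move=> n0 jn ij cn.
have j0 := dvdn_gt0 n0 jn; have i0 := dvdn_gt0 j0 ij; have c0 := dvdn_gt0 n0 cn.
have [vi cv _] := @vpart_spec i j i0.
have u_pr := @u_primes i j.
rewrite /Lent /Rent.
move: vi cv u_pr; set v := vpart i j; set N := n %/ lcmn j c => vi cv u_pr.
case hj: (j %| lcmn i c); last first.
  by rewrite !big1 // => x _; rewrite !andbF.
have -> : \sum_(d <- divisors c) (if (d %| i) && true then totient d * N else 0)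
    = \sum_(d <- divisors c | d %| i) totient d * N.
  by rewrite [RHS]big_mkcond; apply: eq_bigr => d _; rewrite andbT.
rewrite -big_distrl /=.
have -> : \sum_(d <- divisors c | d %| i) totient d = gcdn i c.
  rewrite -big_filter -(@sum_totient_divisors (gcdn i c)); last by rewrite gcdn_gt0 i0.
  apply: perm_big; apply: uniq_perm; rewrite ?filter_uniq ?divisors_uniq //.
  move=> d; rewrite mem_filter -!dvdn_divisors ?gcdn_gt0 ?i0 // dvdn_gcd.
  by rewrite andbC.
set m := j %/ i; set u := i %/ v.
have v0 : 0 < v := dvdn_gt0 i0 vi.
have ei : i = u * v by rewrite /u divnK.
have u0 : 0 < u by move: i0; rewrite ei muln_gt0 => /andP[].
have m0 : 0 < m by rewrite /m divn_gt0 // dvdn_leq.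
have ej : j = u * m * v by rewrite mulnAC -ei mulnC /m divnK.
have wc : u * m %| c.
  apply: (@w_dvd_c u v m c) => //.
    by move=> p pp pu; apply: u_pr.
  by rewrite mulnAC -ej -ei.
have jv : j %/ v = u * m by rewrite ej mulnK.
rewrite jv.
set w := u * m.
have w0 : 0 < w by rewrite muln_gt0 u0 m0.
set c' := c %/ w.
have ec : c = w * c' by rewrite mulnC /c' divnK.
set g := gcdn v c'.
have g0 : 0 < g by rewrite gcdn_gt0 v0.
have -> : \sum_(e <- divisors c) (if [&& w %| e, e %| j & true] then u * totient (e * v %/ j) * N else 0)
    = \sum_(e <- divisors c | (w %| e) && (e %| j)) u * totient (e * v %/ j) * N.
  by rewrite [RHS]big_mkcond; apply: eq_bigr => d _; rewrite andbT.
rewrite -big_filter.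
have hperm : perm_eq [seq e <- divisors c | (w %| e) && (e %| j)] [seq w * f | f <- divisors g].
  apply: uniq_perm; rewrite ?filter_uniq ?divisors_uniq //.
    rewrite map_inj_uniq ?divisors_uniq // => a b /eqP; rewrite eqn_pmul2l // => /eqP.
    done.
  move=> e; rewrite mem_filter -dvdn_divisors //; apply/idP/mapP.
    case/andP => /andP [/dvdnP [f ->] fj] fc; exists f.
      rewrite -dvdn_divisors // dvdn_gcd.
      rewrite ec [f * w]mulnC dvdn_pmul2l // in fc.
      by rewrite ej -/w [f * w]mulnC dvdn_pmul2l // in fj; rewrite fj fc.
    by rewrite mulnC.
  case=> f; rewrite -dvdn_divisors // dvdn_gcd => /andP [fv fc] ->.
  by rewrite dvdn_mulr // {1}ej -/w ec !dvdn_pmul2l // fv fc.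
rewrite (perm_big _ hperm) big_map.
have -> : \sum_(f <- divisors g) u * totient (w * f * v %/ j) * N
    = \sum_(f <- divisors g) u * totient f * N.
  apply: eq_bigr => f _; congr (u * totient _ * N).
  by rewrite ej -/w mulnAC mulnC mulnK // muln_gt0 w0 v0.
rewrite -big_distrl -big_distrr /= sum_totient_divisors //.
congr (_ * N).
rewrite ei {1}ec /w -mulnA -muln_gcdr Gauss_gcdr //.
Qed.

Local Open Scope ring_scope.

Theorem proposition3p2 (K : nzRingType) (n : nat) (x : nat * nat -> K) :
  (0 < n)%N ->
  (forall p, p \in Pidx n -> x p = x (1%N, p.2)) ->
  forall r, r \in Pidx n ->
    \sum_(q <- Pidx n) (Lent n r q)%:R * x q =
    \sum_(q <- Pidx n) (Rent n r q)%:R * x q.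
Proof.
move=> n0 hx r; rewrite /Pidx => /allpairsPdep [j [i [jn ij ->]]].
rewrite !big_allpairs_dep /=.
apply: eq_big_seq => c cn.
have hx' : forall d, d \in divisors c -> x (d, c) = x (1%N, c).
  by move=> d dc; apply: (hx (d, c)); apply/allpairsPdep; exists c, d.
rewrite (eq_big_seq (fun d => (Lent n (i, j) (d, c))%:R * x (1%N, c))); last first.
  by move=> d dc; rewrite hx'.
rewrite [RHS](eq_big_seq (fun d => (Rent n (i, j) (d, c))%:R * x (1%N, c))); last first.
  by move=> d dc; rewrite hx'.
rewrite -!mulr_suml -!natr_sum key //.
- by rewrite dvdn_divisors.
- by rewrite dvdn_divisors // (dvdn_gt0 n0) // dvdn_divisors.
- by rewrite dvdn_divisors.
Qed.
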